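(* Let $n,m>3$ be integers and let $\psi$ be an automorphism of $\mathcal{CSR}(m,n)$. Then there is a permutation $\sigma$ of $[m]$ such that for all distinct $a,b\in[m]$, $\psi$ maps the parts of $\mathcal{P}_{ab}$ onto the parts of $\mathcal{P}_{\sigma(a)\sigma(b)}$, i.e. $\psi(\mathcal{P}_{ab})=\mathcal{P}_{\sigma(a)\sigma(b)}$.
   Context: For positive integers $m,n$, the cyclic simplicial rook graph $\mathcal{CSR}(m,n)$ is the graph whose vertices are the vectors $(a_1,\dots,a_m)\in\mathbb{Z}_n^m$ with $a_1+\cdots+a_m\equiv 0 \pmod n$, two vertices being adjacent if and only if their vectors differ in exactly two coordinates. $[m]=\{1,\dots,m\}$; $e_i\in\mathbb{Z}_n^m$ is the vector with $1$ in coordinate $i$ and $0$ elsewhere; for distinct $a,b\in[m]$, $S_{ab}=\{\alpha(e_a-e_b)\mid \alpha\in\mathbb{Z}_n\}$ (note $S_{ab}=S_{ba}$), $x+A=\{x+y\mid y\in A\}$, and $\mathcal{P}_{ab}=\{\xi+S_{ab}\mid \xi \text{ a vertex of } \mathcal{CSR}(m,n)\}$, which is a partition of the vertex set. $\psi(\mathcal{P}_{ab})$ denotes $\{\psi(P)\mid P\in\mathcal{P}_{ab}\}$. *)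

(* Defs.v *)
From HB Require Import structures.
From mathcomp Require Import all_boot all_order all_algebra all_fingroup.
Set Implicit Arguments. Unset Strict Implicit. Unset Printing Implicit Defensive.
Import GRing.Theory.
Local Open Scope ring_scope.

(* Vertices of CSR(m,n): vectors in Z_n^m (as finite functions 'I_m -> 'Z_n)
   whose coordinates sum to 0 mod n.  'Z_n is Z/nZ for n >= 2 (we use n > 3). *)
Definition csr_vertex (m n : nat) :=
  {f : {ffun 'I_m -> 'Z_n} | \sum_(i < m) f i == 0}.

Definition csr_adj (m n : nat) (x y : csr_vertex m n) : bool :=
  #|[set i : 'I_m | val x i != val y i]| == 2%N.

Definition csr_automorphism (m n : nat) (psi : csr_vertex m n -> csr_vertex m n) :=
  bijective psi /\ forall x y, csr_adj (psi x) (psi y) = csr_adj x y.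

Definition edelta (m n : nat) (a b : 'I_m) (alpha : 'Z_n) : {ffun 'I_m -> 'Z_n} :=
  [ffun i => alpha * ((i == a)%:R - (i == b)%:R)].

Arguments edelta {m n} a b alpha.

Definition csr_part (m n : nat) (a b : 'I_m) (xi : csr_vertex m n) : {set csr_vertex m n} :=
  [set y : csr_vertex m n | [exists alpha : 'Z_n,
      [forall i : 'I_m, val y i == val xi i + edelta a b alpha i]]].

Arguments csr_part {m} n a b xi.

Definition csr_partition (m n : nat) (a b : 'I_m) : {set {set csr_vertex m n}} :=
  [set csr_part n a b xi | xi : csr_vertex m n].

Arguments csr_partition {m} n a b.

Definition image_partition (m n : nat) (psi : csr_vertex m n -> csr_vertex m n)
  (P : {set {set csr_vertex m n}}) : {set {set csr_vertex m n}} :=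
  [set psi @: B | B : {set csr_vertex m n} in P].

(* Main.v *)
Require Import Defs.
From mathcomp Require Import all_boot all_order all_algebra all_fingroup.
From mathcomp Require Import zify.
Set Implicit Arguments. Unset Strict Implicit. Unset Printing Implicit Defensive.
Import GRing.Theory.
Local Open Scope ring_scope.


Section Basics.
Variables m n : nat.
Local Notation V := {ffun 'I_m -> 'Z_n}.
Local Notation ed := (@edelta m n).

Lemma edE c t b i : ed c t b i = b * ((i == c)%:R - (i == t)%:R).
Proof. by rewrite ffunE. Qed.

Lemma ed_c c t b : c != t -> ed c t b c = b.
Proof. by move=> h; rewrite edE eqxx (negbTE h) subr0 mulr1. Qed.

Lemma ed_t c t b : c != t -> ed c t b t = - b.
Proof. by move=> h; rewrite edE eqxx eq_sym (negbTE h) sub0r mulrN1. Qed.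

Lemma ed_out c t b i : i != c -> i != t -> ed c t b i = 0.
Proof. by move=> h1 h2; rewrite edE (negbTE h1) (negbTE h2) subrr mulr0. Qed.

Lemma ed_supp c t b i : ed c t b i != 0 -> i = c \/ i = t.
Proof.
case: (eqVneq i c) => [->|h1]; first by left.
case: (eqVneq i t) => [->|h2]; first by right.
by rewrite ed_out // eqxx.
Qed.

Lemma edS c t b : ed c t b = ed t c (- b).
Proof. by apply/ffunP=> i; rewrite !edE mulNr -mulrN opprB. Qed.

Lemma edD c t b b' : ed c t b + ed c t b' = ed c t (b + b').
Proof. by apply/ffunP=> i; rewrite !ffunE mulrDl. Qed.

Lemma edN c t b : - ed c t b = ed c t (- b).
Proof. by apply/ffunP=> i; rewrite !ffunE mulNr. Qed.

Lemma edT c t s b : ed c t b + ed t s b = ed c s b.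
Proof.
apply/ffunP=> i; rewrite !ffunE -mulrDr; congr (_ * _).
by rewrite addrA subrK.
Qed.

Lemma ed0 c t : ed c t 0 = 0.
Proof. by apply/ffunP=> i; rewrite !ffunE mul0r. Qed.

Lemma ed_inj c t b b' : c != t -> ed c t b = ed c t b' -> b = b'.
Proof. by move=> h e; rewrite -(ed_c b h) -(ed_c b' h) e. Qed.

Lemma edU c t b c' t' b' : c != t -> b != 0 -> c' != t' ->
  ed c t b = ed c' t' b' ->
  (c = c' /\ t = t' /\ b' = b) \/ (c = t' /\ t = c' /\ b' = - b).
Proof.
move=> ct b0 ct' e.
have hc : ed c' t' b' c != 0 by rewrite -e ed_c.
have ht : ed c' t' b' t != 0 by rewrite -e ed_t // oppr_eq0.
case: (ed_supp hc) => ec.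
- subst c'; case: (ed_supp ht) => et.
    by move: ct; rewrite et eqxx.
  subst t'; left; do 2 split=>//.
  by apply: (ed_inj ct); rewrite e.
- subst t'; case: (ed_supp ht) => et.
    subst c'; right; do 2 split => //.
    have := ed_t b' ct'; rewrite -e ed_c // => ->; by rewrite opprK.
  by move: ct; rewrite et eqxx.
Qed.


Lemma sum2 (f : 'I_m -> 'Z_n) c t : c != t ->
  (forall i, i != c -> i != t -> f i = 0) -> \sum_i f i = f c + f t.
Proof.
move=> ct h; rewrite (bigD1 c) //= (bigD1 t) /=; last by rewrite eq_sym.
rewrite big1 ?addr0 // => i /andP [h1 h2]; exact: h.
Qed.

Lemma sum_ed c t b : \sum_i ed c t b i = 0.
Proof.
case: (eqVneq c t) => [<-|ct].
  by rewrite big1 // => i _; rewrite edE subrr mulr0.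
rewrite (@sum2 _ c t) //; last by move=> i; exact: ed_out.
by rewrite ed_c // ed_t // subrr.
Qed.

Local Notation vtx := (csr_vertex m n).

Lemma mkV_proof (x : vtx) c t b : \sum_(i < m) (val x + ed c t b) i == 0.
Proof.
apply/eqP; rewrite (eq_bigr (fun i => val x i + ed c t b i)); last by move=> i _; rewrite ffunE.
by rewrite big_split /= sum_ed addr0; apply/eqP; exact: (valP x).
Qed.

Definition mkV (x : vtx) c t b : vtx := exist _ (val x + ed c t b) (mkV_proof x c t b).

Lemma mkVE x c t b : val (mkV x c t b) = val x + ed c t b.
Proof. by []. Qed.

Definition adjV (x y : vtx) := exists c t b, [/\ c != t, b != 0 & val y = val x + ed c t b].

Lemma adjP x y : csr_adj x y <-> adjV x y.
Proof.
rewrite /csr_adj; split.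
- case/cards2P => c [t [ct eS]].
  have inS i : (i \in [set i | val x i != val y i]) = (val x i != val y i) by rewrite inE.
  pose d := val y - val x.
  have dE i : d i = val y i - val x i by rewrite /d !ffunE.
  have d0 i : i != c -> i != t -> d i = 0.
    move=> h1 h2; have : i \notin [set c; t] by rewrite !inE negb_or h1 h2.
    by rewrite -eS inS negbK dE => /eqP ->; rewrite subrr.
  have sd : \sum_i d i = 0.
    rewrite (eq_bigr (fun i => val y i - val x i)); last by move=> i _; rewrite dE.
    by rewrite sumrB (eqP (valP y)) (eqP (valP x)) subrr.
  rewrite (sum2 ct d0) in sd.
  exists c, t, (d c); split => //.
    have : c \in [set c; t] by rewrite !inE eqxx.
    by rewrite -eS inS dE subr_eq0 eq_sym.
  apply/ffunP => i; rewrite ffunE.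
  case: (eqVneq i c) => [->|ic].
    by rewrite ed_c // dE addrC subrK.
  case: (eqVneq i t) => [->|it].
    have dt : d t = - d c by apply/eqP; rewrite -addr_eq0 addrC sd.
    by rewrite ed_t // -dt dE addrC subrK.
  rewrite ed_out // addr0; apply/eqP; rewrite -subr_eq0 -dE; exact/eqP/d0.
- case=> c [t [b [ct b0 ey]]].
  apply/cards2P; exists c, t; split => //; apply/setP => i.
  rewrite !inE ey ffunE -subr_eq0 opprD addrA subrr sub0r oppr_eq0.
  case: (eqVneq i c) => [->|ic]; first by rewrite ed_c // b0 eqxx.
  case: (eqVneq i t) => [->|it]; first by rewrite ed_t // oppr_eq0 b0 orbT.
  by rewrite ed_out // eqxx.
Qed.

Lemma adj_of (x y : vtx) c t b : c != t -> b != 0 -> val y = val x + ed c t b -> csr_adj x y.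
Proof. by move=> h1 h2 h3; apply/adjP; exists c, t, b. Qed.

Lemma adj_sym (x y : vtx) : csr_adj x y -> csr_adj y x.
Proof.
case/adjP=> c [t [b [ct b0 e]]]; apply: (adj_of (c:=c) (t:=t) (b:=-b)) => //.
  by rewrite oppr_eq0.
by rewrite e -addrA edD subrr ed0 addr0.
Qed.

Lemma adj_irr (x : vtx) : ~~ csr_adj x x.
Proof.
apply/negP => /adjP [c [t [b [ct b0 e]]]].
have : ed c t b c = 0.
  have h : ed c t b = 0 by apply: (@addrI _ (val x)); rewrite addr0 -e.
  by rewrite h ffunE.
by rewrite ed_c // => /eqP; rewrite (negbTE b0).
Qed.


Lemma edv_add (f g : V) i : (f + g) i = f i + g i.
Proof. by rewrite ffunE. Qed.

Lemma star_core p q s b g c t d : p != q -> p != s -> q != s -> b != 0 -> g != 0 ->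
  c != t -> ed p s g = ed p q b + ed c t d -> g = b.
Proof.
move=> pq ps qs b0 g0 ct e.
have H i : ed c t d i = ed p s g i - ed p q b i by rewrite e edv_add addrC addKr.
have qp : q != p by rewrite eq_sym.
have sp : s != p by rewrite eq_sym.
have sq : s != q by rewrite eq_sym.
have hq : ed c t d q != 0.
  by rewrite H (@ed_out p s g q qp qs) (ed_t _ pq) sub0r opprK.
have hs : ed c t d s != 0.
  by rewrite H (ed_t _ ps) (@ed_out p q b s sp sq) subr0 oppr_eq0.
have hp : ed c t d p = 0.
  case: (ed_supp hq) => eq; case: (ed_supp hs) => es; subst.
  - by rewrite eqxx in qs.
  - by rewrite ed_out // eq_sym.
  - by rewrite ed_out // eq_sym.
  - by rewrite eqxx in qs.
by apply/eqP; rewrite -subr_eq0 -(ed_c g ps) -(ed_c b pq) -H hp.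
Qed.

Definition starV (u w : V) := exists c0 t1 t2 a,
  [/\ c0 != t1, c0 != t2, t1 != t2, a != 0 & u = ed c0 t1 a /\ w = ed c0 t2 a].

Lemma triV p q b r s g c t d : p != q -> b != 0 -> r != s -> g != 0 -> c != t ->
  ed r s g = ed p q b + ed c t d ->
  (exists g', g' != 0 /\ ed r s g = ed p q g') \/ starV (ed p q b) (ed r s g).
Proof.
move=> pq b0 rs g0 ct e.
have H i : ed c t d i = ed r s g i - ed p q b i by rewrite e edv_add addrC addKr.
(* reduce to the case p = r *)
have core : forall p q b s g, p != q -> b != 0 -> p != s -> g != 0 ->
    ed p s g = ed p q b + ed c t d ->
    (exists g', g' != 0 /\ ed p s g = ed p q g') \/ starV (ed p q b) (ed p s g).
  move=> p1 q1 b1 s1 g1 h1 h2 h3 h4 h5.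
  case: (eqVneq q1 s1) => [<-|qs]; first by left; exists g1.
  right; exists p1, q1, s1, b1; split => //.
  by rewrite (star_core h1 h3 qs h2 h4 ct h5).
have NN x : x != 0 -> - x != 0 :> 'Z_n by move=> hx; rewrite oppr_eq0.
case: (eqVneq p r) => [pr|pr].
  by subst r; apply: core.
case: (eqVneq p s) => [ps|ps].
  subst s; rewrite (edS r) in e *; by apply: core => //; rewrite oppr_eq0.
have qp : q != p by rewrite eq_sym.
case: (eqVneq q r) => [qr|qr].
  subst r; rewrite (edS p) in e *.
  have [[g' [g'0 e']]|[c0 [t1 [t2 [a [h1 h2 h3 h4 [h5 h6]]]]]]] :=
    core _ _ _ _ _ qp (NN _ b0) rs g0 e.
    by left; exists (- g'); rewrite e' edS oppr_eq0; split.
  by right; exists c0, t1, t2, a; split.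
case: (eqVneq q s) => [qs|qs].
  subst s; rewrite (edS p) (edS r) in e *.
  have [[g' [g'0 e']]|[c0 [t1 [t2 [a [h1 h2 h3 h4 [h5 h6]]]]]]] :=
    core _ _ _ _ _ qp (NN _ b0) qr (NN _ g0) e.
    by left; exists (- g'); rewrite e' edS oppr_eq0; split.
  by right; exists c0, t1, t2, a; split.
exfalso.
have rp : r != p by rewrite eq_sym.
have rq : r != q by rewrite eq_sym.
have hp : ed c t d p != 0 by rewrite H (@ed_out r s g p pr ps) (ed_c _ pq) sub0r oppr_eq0.
have hq : ed c t d q != 0 by rewrite H (@ed_out r s g q qr qs) (ed_t _ pq) sub0r opprK.
have hr : ed c t d r != 0 by rewrite H (ed_c _ rs) (@ed_out p q b r rp rq) subr0.
case: (ed_supp hp) => ep; case: (ed_supp hq) => eq; subst;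
  try by rewrite eqxx in pq.
- by case: (ed_supp hr) => er; subst; rewrite eqxx in pr qr.
- by case: (ed_supp hr) => er; subst; rewrite eqxx in pr qr.
Qed.


Definition SDir (x y w : vtx) := exists c t b g,
  [/\ c != t, b != 0, g != 0, val y = val x + ed c t b & val w = val x + ed c t g].

Definition StarT (x y w : vtx) := exists c0 t1 t2 a,
  [/\ c0 != t1, c0 != t2, t1 != t2 & a != 0] /\
  val y = val x + ed c0 t1 a /\ val w = val x + ed c0 t2 a.

Lemma same_rep (x u : vtx) c t b c' t' b' :
  val u = val x + ed c t b -> val u = val x + ed c' t' b' -> ed c t b = ed c' t' b'.
Proof. by move=> e1 e2; apply: (@addrI _ (val x)); rewrite -e1 -e2. Qed.

Lemma tri (x y w : vtx) : csr_adj x y -> csr_adj x w -> csr_adj y w ->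
  SDir x y w \/ StarT x y w.
Proof.
case/adjP=> p [q [b [pq b0 ey]]]; case/adjP=> r [s [g [rs g0 ew]]].
case/adjP=> c [t [d [ct d0 ewy]]].
have e : ed r s g = ed p q b + ed c t d.
  by apply: (@addrI _ (val x)); rewrite -ew ewy ey addrA.
case: (triV pq b0 rs g0 ct e) => [[g' [g'0 e']]|[c0 [t1 [t2 [a [h1 h2 h3 h4 [h5 h6]]]]]]].
  by left; exists p, q, b, g'; split => //; rewrite ew e'.
by right; exists c0, t1, t2, a; split; [split|split; [rewrite ey h5|rewrite ew h6]].
Qed.

Definition inC (x y w u : vtx) :=
  u = y \/ u = w \/ [/\ csr_adj x u, csr_adj y u & csr_adj w u].

Definition Col (x y w : vtx) :=
  [/\ csr_adj x y, csr_adj x w, csr_adj y w &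
   exists y' w', [/\ csr_adj x y', csr_adj x w', csr_adj y' w' &
     forall u v, inC x y w u -> inC x y' w' v -> u <> v /\ ~~ csr_adj u v]].

Lemma lineC (x y w u : vtx) a b be ga : a != b -> be != 0 -> ga != 0 ->
  val y = val x + ed a b be -> val w = val x + ed a b ga -> csr_adj y w ->
  inC x y w u -> exists b0, b0 != 0 /\ val u = val x + ed a b b0.
Proof.
move=> ab be0 ga0 ey ew yw.
case=> [->|[->|[xu yu wu]]]; [by exists be | by exists ga|].
have G : forall c t d, c != t -> d != 0 -> val u = val x + ed c t d ->
    (c = a /\ t = b) \/ (c = b /\ t = a) -> exists b0, b0 != 0 /\ val u = val x + ed a b b0.
  move=> c t d ct d0 eu [[e1 e2]|[e1 e2]]; subst c t; first by exists d.
  by exists (- d); rewrite oppr_eq0 eu edS.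
have H1 : forall (z : vtx) be', be' != 0 -> val z = val x + ed a b be' -> SDir x z u ->
    exists b0, b0 != 0 /\ val u = val x + ed a b b0.
  move=> z be' be'0 ez [c [t [b1 [b2 [ct b10 b20 ez' eu]]]]].
  apply: (G c t b2) => //.
  case: (edU ab be'0 ct (same_rep ez ez')) => [[e1 [e2 _]]|[e1 [e2 _]]];
    [left|right]; split; congruence.
have xy : csr_adj x y by apply: (adj_of ab be0 ey).
have xw : csr_adj x w by apply: (adj_of ab ga0 ew).
case: (tri xy xu yu) => [sd|[c0 [t1 [t2 [al [[h1 h2 h3 h4] [ey1 eu1]]]]]]].
  exact: (H1 y be).
case: (tri xw xu wu) => [sd|[c1 [s1 [s2 [al' [[k1 k2 k3 k4] [ew1 eu2]]]]]]].
  exact: (H1 w ga).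
have bega : be != ga.
  apply/negP => /eqP bg; subst ga.
  have yw' : y = w by apply: val_inj; rewrite ey ew.
  by move: yw; rewrite yw' (negbTE (adj_irr w)).
have EY := edU ab be0 h1 (same_rep ey ey1).
have EW := edU ab ga0 k1 (same_rep ew ew1).
have EU := edU h2 h4 k2 (same_rep eu1 eu2).
case: EU => [[? [? ?]]|[? [? ?]]]; case: EY => [[? [? ?]]|[? [? ?]]];
  case: EW => [[? [? ?]]|[? [? ?]]]; subst;
  try solve [ by rewrite eqxx in ab | by rewrite eqxx in h2 | by rewrite eqxx in bega
   | by rewrite eqxx in h3 | by rewrite eqxx in k3
   | match goal with H : - _ = - _ |- _ => move/oppr_inj: H => H; subst; by rewrite eqxx in bega end
   | by apply: (G _ _ _ h2 h4 eu1); [left|right] ].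
Qed.


Lemma pick_notin (s : seq 'I_m) : (size s < m)%N -> exists i, i \notin s.
Proof.
move=> hs; case: (pickP (fun i => i \notin s)) => [i hi|h]; first by exists i.
exfalso; have := card_size s.
have -> : #|s| = #|'I_m|.
  by apply: eq_card => i; move/negbT: (h i); rewrite negbK.
by rewrite card_ord leqNgt hs.
Qed.

Lemma disj_lines (x u v : vtx) a b c d b0 b1 : a != b -> c != d -> b0 != 0 -> b1 != 0 ->
  c != a -> c != b -> d != a -> d != b ->
  val u = val x + ed a b b0 -> val v = val x + ed c d b1 -> u <> v /\ ~~ csr_adj u v.
Proof.
move=> ab cd b00 b10 ca cb da db eu ev; split.
  move=> uv; subst v.
  case: (edU ab b00 cd (same_rep eu ev)) => [[e1 _]|[e1 _]]; subst.
    by rewrite eqxx in ca.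
  by rewrite eqxx in da.
apply/negP => uv.
have xu : csr_adj x u by apply: (adj_of ab b00 eu).
have xv : csr_adj x v by apply: (adj_of cd b10 ev).
case: (tri xu xv uv) => [[p [q [g1 [g2 [pq g10 g20 eu' ev']]]]]|[c0 [t1 [t2 [al [[h1 h2 h3 h4] [eu' ev']]]]]]].
  have E1 := edU ab b00 pq (same_rep eu eu').
  have E2 := edU cd b10 pq (same_rep ev ev').
  case: E1 => [[? [? ?]]|[? [? ?]]]; case: E2 => [[? [? ?]]|[? [? ?]]]; subst;
    by rewrite ?eqxx in ca cb da db.
have E1 := edU ab b00 h1 (same_rep eu eu').
have E2 := edU cd b10 h2 (same_rep ev ev').
case: E1 => [[? [? ?]]|[? [? ?]]]; case: E2 => [[? [? ?]]|[? [? ?]]]; subst;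
  by rewrite ?eqxx in ca cb da db.
Qed.

Lemma opp_ne0 (z : 'Z_n) : z != 0 -> - z != 0.
Proof. by rewrite oppr_eq0. Qed.

Lemma Col_line (x y w : vtx) a b be ga : (3 < m)%N -> (1 + 1 : 'Z_n) != 0 ->
  a != b -> be != 0 -> ga != 0 ->
  val y = val x + ed a b be -> val w = val x + ed a b ga -> csr_adj y w -> Col x y w.
Proof.
move=> hm two ab be0 ga0 ey ew yw.
have one : (1 : 'Z_n) != 0 by apply/eqP => h; move: two; rewrite h addr0 eqxx.
have [c hc] : exists c, c \notin [:: a; b] by apply: pick_notin => /=; lia.
have [d hd] : exists d, d \notin [:: a; b; c] by apply: pick_notin => /=; lia.
move: hc hd; rewrite !inE !negb_or => /andP [ca cb] /andP [da /andP [db dc]].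
have cd : c != d by rewrite eq_sym.
split.
- exact: (adj_of ab be0 ey).
- exact: (adj_of ab ga0 ew).
- exact: yw.
exists (mkV x c d 1), (mkV x c d (-1)); split.
- exact: (adj_of cd one (mkVE _ _ _ _)).
- exact: (adj_of cd (opp_ne0 one) (mkVE _ _ _ _)).
- apply: (adj_of (c := c) (t := d) (b := - (1 + 1))) => //; first exact: opp_ne0.
  by rewrite !mkVE -addrA edD opprD addrA addrN add0r.
move=> u v hu hv.
have [b0 [b00 eu]] := lineC ab be0 ga0 ey ew yw hu.
have yw' : csr_adj (mkV x c d 1) (mkV x c d (-1)).
  apply: (adj_of (c := c) (t := d) (b := - (1 + 1))) => //; first exact: opp_ne0.
  by rewrite !mkVE -addrA edD opprD addrA addrN add0r.
have [b1 [b10 ev]] := lineC cd one (opp_ne0 one) (mkVE _ _ _ _) (mkVE _ _ _ _) yw' hv.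
exact: (disj_lines ab cd b00 b10 ca cb da db eu ev).
Qed.


Lemma mem_star (x y w : vtx) p q r be s : p != q -> p != r -> q != r -> be != 0 -> p != s ->
  val y = val x + ed p q be -> val w = val x + ed p r be -> inC x y w (mkV x p s be).
Proof.
move=> pq pr qr be0 ps ey ew.
case: (eqVneq s q) => [->|sq].
  by left; apply: val_inj; rewrite mkVE ey.
case: (eqVneq s r) => [->|sr].
  by right; left; apply: val_inj; rewrite mkVE ew.
right; right; split.
- exact: (adj_of ps be0 (mkVE _ _ _ _)).
- apply: (adj_of (c := q) (t := s) (b := be)) => //; first by rewrite eq_sym in sq.
  by rewrite mkVE ey -addrA edT.
- apply: (adj_of (c := r) (t := s) (b := be)) => //; first by rewrite eq_sym in sr.
  by rewrite mkVE ew -addrA edT.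
Qed.

Lemma mem_line (x y w : vtx) p q b1 b2 de : p != q -> b1 != 0 -> b2 != 0 -> de != 0 ->
  val y = val x + ed p q b1 -> val w = val x + ed p q b2 -> inC x y w (mkV x p q de).
Proof.
move=> pq b10 b20 de0 ey ew.
case: (eqVneq de b1) => [->|d1].
  by left; apply: val_inj; rewrite mkVE ey.
case: (eqVneq de b2) => [->|d2].
  by right; left; apply: val_inj; rewrite mkVE ew.
right; right; split.
- exact: (adj_of pq de0 (mkVE _ _ _ _)).
- apply: (adj_of (c := p) (t := q) (b := de - b1)) => //; first by rewrite subr_eq0.
  by rewrite mkVE ey -addrA edD addrCA subrr addr0.
- apply: (adj_of (c := p) (t := q) (b := de - b2)) => //; first by rewrite subr_eq0.
  by rewrite mkVE ew -addrA edD addrCA subrr addr0.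
Qed.

Lemma Col_star (x y w : vtx) : StarT x y w -> ~ Col x y w.
Proof.
case=> [a [b [c [al [[ab ac bc al0] [ey ew]]]]]].
case=> [xy xw yw [y' [w' [xy' xw' yw' P]]]].
have K d : a != d -> inC x y w (mkV x a d al) by move=> ad; exact: (mem_star ab ac bc al0 ad ey ew).
have bad : forall u v, inC x y w u -> inC x y' w' v -> u = v \/ csr_adj u v -> False.
  move=> u v hu hv [uv|uv]; have [h1 h2] := P u v hu hv; first by [].
  by rewrite uv in h2.
case: (tri xy' xw' yw') => [[p [q [b1 [b2 [pq b10 b20 ey' ew']]]]]|[p [q [r [be [[pq pr qr be0] [ey' ew']]]]]]].
- have L de : de != 0 -> inC x y' w' (mkV x p q de).
    by move=> de0; exact: (mem_line pq b10 b20 de0 ey' ew').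
  case: (eqVneq a p) => [ap|ap].
    subst p; apply: (bad _ _ (K q pq) (L al al0)); left; exact: val_inj.
  case: (eqVneq a q) => [aq|aq].
    subst q; apply: (bad _ _ (K p ap) (L (- al) (opp_ne0 al0))); left.
    by apply: val_inj; rewrite !mkVE edS.
  have aq' : a != q by [].
  apply: (bad _ _ (K q aq') (L al al0)); right.
  apply: (adj_of (c := p) (t := a) (b := al)) => //; first by rewrite eq_sym.
  by rewrite !mkVE -addrA [ed a q al + _]addrC edT.
- have M s : p != s -> inC x y' w' (mkV x p s be) by move=> ps; exact: (mem_star pq pr qr be0 ps ey' ew').
  case: (eqVneq a p) => [ap|ap].
    subst p; apply: (bad _ _ (K b ab) (M b ab)).
    case: (eqVneq al be) => [<-|albe]; first by left.
    right; apply: (adj_of (c := a) (t := b) (b := be - al)) => //; first by rewrite subr_eq0 eq_sym.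
    by rewrite !mkVE -addrA edD addrCA subrr addr0.
  have pa : p != a by rewrite eq_sym.
  apply: (bad _ _ (K p ap) (M a pa)).
  case: (eqVneq al (- be)) => [e|albe].
    by left; apply: val_inj; rewrite !mkVE e -edS.
  right; apply: (adj_of (c := a) (t := p) (b := - be - al)) => //; first by rewrite subr_eq0 eq_sym.
  by rewrite !mkVE -addrA edD addrCA subrr addr0 -edS.
Qed.


Lemma halfZ (x y : 'Z_n) : x != 0 -> x = - x -> y != 0 -> y = - y -> x = y.
Proof.
move=> x0 ex y0 ey.
have hx : val x = val (- x) by rewrite -ex.
have hy : val y = val (- y) by rewrite -ey.
move: x0 y0 hx hy; rewrite /= -!val_eqE /=.
have := ltn_ord x; have := ltn_ord y.
set N := (Zp_trunc n).+1.
move=> ly lx x0 y0 hx hy; apply: val_inj => /=.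
rewrite modn_small in hx; last by lia.
rewrite modn_small in hy; last by lia.
lia.
Qed.

Lemma SC (z y w : vtx) p q r b1 b2 : p != q -> p != r -> q != r -> b1 != 0 -> b2 != 0 ->
  val y = val z + ed p q b1 -> val w = val z + ed p r b2 -> csr_adj y w -> b1 = b2.
Proof.
move=> pq pr qr b10 b20 ey ew yw.
have zy : csr_adj z y by apply: (adj_of pq b10 ey).
have zw : csr_adj z w by apply: (adj_of pr b20 ew).
case: (tri zy zw yw) => [[c [t [g1 [g2 [ct g10 g20 ey' ew']]]]]|[c0 [t1 [t2 [al [[h1 h2 h3 h4] [ey' ew']]]]]]].
  have E1 := edU pq b10 ct (same_rep ey ey').
  have E2 := edU pr b20 ct (same_rep ew ew').
  case: E1 => [[? [? ?]]|[? [? ?]]]; case: E2 => [[? [? ?]]|[? [? ?]]]; subst;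
    by rewrite ?eqxx in pq pr qr.
have E1 := edU pq b10 h1 (same_rep ey ey').
have E2 := edU pr b20 h2 (same_rep ew ew').
case: E1 => [[? [? ?]]|[? [? ?]]]; case: E2 => [[? [? ?]]|[? [? ?]]]; subst;
  rewrite ?eqxx in pq pr qr h1 h2 h3 => //.
Qed.

Lemma sd_pair (x y w : vtx) a b be a' b' be' : a != b -> be != 0 -> a' != b' -> be' != 0 ->
  SDir x y w -> val y = val x + ed a b be -> val w = val x + ed a' b' be' ->
  (a = a' /\ b = b') \/ (a = b' /\ b = a').
Proof.
move=> ab be0 ab' be0' [c [t [g1 [g2 [ct g10 g20 ey' ew']]]]] ey ew.
have E1 := edU ab be0 ct (same_rep ey ey').
have E2 := edU ab' be0' ct (same_rep ew ew').
case: E1 => [[? [? ?]]|[? [? ?]]]; case: E2 => [[? [? ?]]|[? [? ?]]]; subst; by [left|right].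
Qed.

Section Gen.
Variable phi : vtx -> vtx.
Hypothesis phi_adj : forall x y, csr_adj (phi x) (phi y) = csr_adj x y.
Hypothesis phi_inj : injective phi.
Hypothesis phi_surj : forall y, exists x, y = phi x.

Lemma inC_phi x y w u : inC x y w u -> inC (phi x) (phi y) (phi w) (phi u).
Proof.
by case=> [->|[->|[h1 h2 h3]]]; [left|right;left|right;right;rewrite !phi_adj].
Qed.

Lemma inC_phiV x y w u : inC (phi x) (phi y) (phi w) (phi u) -> inC x y w u.
Proof.
case=> [e|[e|[h1 h2 h3]]]; [left; exact: (phi_inj e)|right;left; exact: (phi_inj e)|].
by right; right; split; rewrite -phi_adj.
Qed.

Lemma Col_phi x y w : Col x y w -> Col (phi x) (phi y) (phi w).
Proof.
case=> [xy xw yw [y' [w' [xy' xw' yw' P]]]].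
split; rewrite ?phi_adj //.
exists (phi y'), (phi w'); split; rewrite ?phi_adj //.
move=> u v; case: (phi_surj u) => u0 ->; case: (phi_surj v) => v0 ->.
move=> /inC_phiV hu /inC_phiV hv; have [h1 h2] := P _ _ hu hv.
split; last by rewrite phi_adj.
by move=> e; apply: h1; exact: (phi_inj e).
Qed.

Lemma SD_pres x y w : (3 < m)%N -> (1 + 1 : 'Z_n) != 0 ->
  SDir x y w -> SDir (phi x) (phi y) (phi w).
Proof.
move=> hm two [c [t [b [g [ct b0 g0 ey ew]]]]].
have xy : csr_adj x y by apply: (adj_of ct b0 ey).
have xw : csr_adj x w by apply: (adj_of ct g0 ew).
case: (eqVneq b g) => [bg|bg].
  subst g; have yw : y = w by apply: val_inj; rewrite ey ew.
  subst w; rewrite -phi_adj in xy; case/adjP: xy => p [q [be [pq be0 e]]].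
  by exists p, q, be, be; split.
have yw : csr_adj y w.
  apply: (adj_of (c := c) (t := t) (b := g - b)) => //; first by rewrite subr_eq0 eq_sym.
  by rewrite ew ey -addrA edD addrCA subrr addr0.
have C := Col_phi (Col_line hm two ct b0 g0 ey ew yw).
rewrite -phi_adj in xy; rewrite -phi_adj in xw; rewrite -phi_adj in yw.
case: (tri xy xw yw) => // st; exfalso; exact: (Col_star st C).
Qed.

End Gen.

End Basics.


Section Auto.
Variables m n : nat.
Local Notation vtx := (csr_vertex m n).
Local Notation ed := (@edelta m n).
Variables psi g : vtx -> vtx.
Hypothesis hpg : cancel psi g.
Hypothesis hgp : cancel g psi.
Hypothesis hadj : forall x y, csr_adj (psi x) (psi y) = csr_adj x y.
Hypothesis hm : (3 < m)%N.
Hypothesis two : (1 + 1 : 'Z_n) != 0.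

Lemma gadj x y : csr_adj (g x) (g y) = csr_adj x y.
Proof. by rewrite -hadj !hgp. Qed.
Lemma psi_inj : injective psi. Proof. exact: can_inj hpg. Qed.
Lemma g_inj : injective g. Proof. exact: can_inj hgp. Qed.
Lemma psi_surj y : exists x, y = psi x. Proof. by exists (g y); rewrite hgp. Qed.
Lemma g_surj y : exists x, y = g x. Proof. by exists (psi y); rewrite hpg. Qed.

Lemma SDp x y w : SDir x y w -> SDir (psi x) (psi y) (psi w).
Proof. exact: (SD_pres hadj psi_inj psi_surj hm two). Qed.

Lemma SDr x y w : SDir (psi x) (psi y) (psi w) -> SDir x y w.
Proof. by move=> h; have := SD_pres gadj g_inj g_surj hm two h; rewrite !hpg. Qed.

Lemma one0 : (1 : 'Z_n) != 0.
Proof. by apply/eqP => h; move: two; rewrite h addr0 eqxx. Qed.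

Lemma mone0 : (-1 : 'Z_n) != 0.
Proof. by rewrite oppr_eq0 one0. Qed.

Lemma mone1 : (-1 : 'Z_n) != 1.
Proof.
apply/eqP => h; move: two; have -> : (1 : 'Z_n) + 1 = 0 by rewrite -[X in X + _]h addNr.
by rewrite eqxx.
Qed.

Section Vertex.
Variable x : vtx.

Lemma img_rep c t b : c != t -> b != 0 -> exists p q be,
  [/\ p != q, be != 0 & val (psi (mkV x c t b)) = val (psi x) + ed p q be].
Proof.
move=> ct b0; have : csr_adj (psi x) (psi (mkV x c t b)).
  by rewrite hadj; apply: (adj_of ct b0 (mkVE _ _ _ _)).
by case/adjP=> p [q [be [pq be0 e]]]; exists p, q, be.
Qed.

Lemma SDx c t b b' p q be : c != t -> b != 0 -> b' != 0 -> p != q -> be != 0 ->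
  val (psi (mkV x c t b)) = val (psi x) + ed p q be ->
  exists be', be' != 0 /\ val (psi (mkV x c t b')) = val (psi x) + ed p q be'.
Proof.
move=> ct b0 b0' pq be0 e.
have sd : SDir x (mkV x c t b) (mkV x c t b') by exists c, t, b, b'; split.
have [c' [t' [g1 [g2 [ct' g10 g20 e1 e2]]]]] := SDp sd.
case: (edU pq be0 ct' (same_rep e e1)) => [[? [? ?]]|[? [? ?]]]; subst.
  by exists g2.
by exists (- g2); rewrite oppr_eq0 e2 edS.
Qed.

Lemma adjY c t t' b : c != t -> c != t' -> t != t' -> b != 0 ->
  csr_adj (mkV x c t b) (mkV x c t' b).
Proof.
move=> ct ct' tt' b0; apply: (adj_of (c := t) (t := t') (b := b)) => //.
by rewrite !mkVE -addrA edT.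
Qed.

Lemma starY c t t' b : c != t -> c != t' -> t != t' -> b != 0 ->
  StarT (psi x) (psi (mkV x c t b)) (psi (mkV x c t' b)).
Proof.
move=> ct ct' tt' b0.
have h1 : csr_adj (psi x) (psi (mkV x c t b)) by rewrite hadj; exact: (adj_of ct b0 (mkVE _ _ _ _)).
have h2 : csr_adj (psi x) (psi (mkV x c t' b)) by rewrite hadj; exact: (adj_of ct' b0 (mkVE _ _ _ _)).
have h3 : csr_adj (psi (mkV x c t b)) (psi (mkV x c t' b)) by rewrite hadj; exact: adjY.
case: (tri h1 h2 h3) => // /SDr sd; exfalso.
have := sd_pair ct b0 ct' b0 sd (mkVE _ _ _ _) (mkVE _ _ _ _).
case=> [[_ e]|[e _]]; subst; by rewrite eqxx in tt' ct'.
Qed.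


Lemma center a : exists p, forall d, a != d -> forall b, b != 0 -> exists q be,
  [/\ p != q, be != 0 & val (psi (mkV x a d b)) = val (psi x) + ed p q be].
Proof.
have one := one0; have mone := mone0.
have [d1 h1] : exists d1, d1 \notin [:: a] by apply: pick_notin => /=; lia.
have [d2 h2] : exists d2, d2 \notin [:: a; d1] by apply: pick_notin => /=; lia.
move: h1 h2; rewrite !inE !negb_or => d1a /andP [d2a d2d1].
have ad1 : a != d1 by rewrite eq_sym.
have ad2 : a != d2 by rewrite eq_sym.
have d12 : d1 != d2 by rewrite eq_sym.
have [p [q [r [ga [[pq pr qr ga0] [e1 e2]]]]]] := starY ad1 ad2 d12 one.
suff S1 : forall d, a != d -> exists q' be,
    [/\ p != q', be != 0 & val (psi (mkV x a d 1)) = val (psi x) + ed p q' be].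
  exists p => d ad b b0; have [q' [be [pq' be0 e]]] := S1 d ad.
  have [be' [be0' e']] := SDx ad one b0 pq' be0 e.
  by exists q', be'.
move=> d ad.
case: (eqVneq d d1) => [->|dd1]; first by exists q, ga.
case: (eqVneq d d2) => [->|dd2]; first by exists r, ga.
have d1d : d1 != d by rewrite eq_sym.
have d2d : d2 != d by rewrite eq_sym.
have [c0 [t1 [t2 [al [[k1 k2 k3 k4] [f1 f2]]]]]] := starY ad1 ad d1d one.
case: (edU pq ga0 k1 (same_rep e1 f1)) => [[ep [eq eal]]|[ep [eq eal]]].
  by exists t2, al; rewrite ep; split.
rewrite -eq eal in f2; rewrite -eq in k2.
have [c1 [s1 [s2 [al' [[l1 l2 l3 l4] [g1 g2]]]]]] := starY ad2 ad d2d one.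
case: (edU pr ga0 l1 (same_rep e2 g1)) => [[ep' [er eal']]|[ep' [er eal']]].
  by exists s2, al'; rewrite ep'; split.
rewrite -er eal' in g2; rewrite -er in l2.
have mga0 : - ga != 0 by rewrite oppr_eq0.
case: (edU k2 mga0 l2 (same_rep f2 g2)) => [[eqr _]|[eqs [et2 hga]]].
  by rewrite eqr eqxx in qr.
rewrite et2 in f2.
rewrite opprK in hga.
have [z1 [z10 ez1]] := SDx ad1 one mone pq ga0 e1.
have [z2 [z20 ez2]] := SDx ad2 one mone pr ga0 e2.
have [z3 [z30 ez3]] := SDx ad one mone qr mga0 f2.
have a12 : csr_adj (psi (mkV x a d1 (-1))) (psi (mkV x a d2 (-1))) by rewrite hadj adjY.
have a13 : csr_adj (psi (mkV x a d1 (-1))) (psi (mkV x a d (-1))) by rewrite hadj adjY.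
have a23 : csr_adj (psi (mkV x a d2 (-1))) (psi (mkV x a d (-1))) by rewrite hadj adjY.
have qp : q != p by rewrite eq_sym.
have rp : r != p by rewrite eq_sym.
have rq : r != q by rewrite eq_sym.
have E12 := SC pq pr qr z10 z20 ez1 ez2 a12.
rewrite edS in ez1; rewrite edS in ez2.
have E13 := SC qp qr pr (opp_ne0 z10) z30 ez1 ez3 a13.
rewrite edS in ez3.
have E23 := SC rp rq pq (opp_ne0 z20) (opp_ne0 z30) ez2 ez3 a23.
have hz : z1 = - z1.
  move/oppr_inj: E23 => E23; apply: oppr_inj; by rewrite opprK E13 -E23 -E12.
have := halfZ ga0 (esym hga) z10 hz => E.
rewrite -E edS opprK in ez1.
have : psi (mkV x a d1 (-1)) = psi (mkV x a d1 1) by apply: val_inj; rewrite ez1 e1.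
move/psi_inj => /(congr1 val); rewrite !mkVE => /addrI /(ed_inj ad1) /eqP.
by rewrite (negbTE mone1).
Qed.

Lemma diffq c t b c' t' b' p q be be' : c != t -> b != 0 -> c' != t' -> b' != 0 ->
  p != q -> be != 0 -> be' != 0 ->
  val (psi (mkV x c t b)) = val (psi x) + ed p q be ->
  val (psi (mkV x c' t' b')) = val (psi x) + ed p q be' ->
  (c = c' /\ t = t') \/ (c = t' /\ t = c').
Proof.
move=> ct b0 ct' b0' pq be0 be0' e1 e2.
have sd : SDir (psi x) (psi (mkV x c t b)) (psi (mkV x c' t' b')) by exists p, q, be, be'; split.
exact: (sd_pair ct b0 ct' b0' (SDr sd) (mkVE _ _ _ _) (mkVE _ _ _ _)).
Qed.

Lemma mkV_swap c t b : mkV x t c b = mkV x c t (- b).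
Proof. by apply: val_inj; rewrite !mkVE edS. Qed.

Definition Good (s : 'I_m -> 'I_m) := forall c t b, c != t -> b != 0 ->
  exists be, be != 0 /\ val (psi (mkV x c t b)) = val (psi x) + ed (s c) (s t) be.

Lemma good_exists : exists s, injective s /\ Good s.
Proof.
have [s hs] := fin_all_exists center.
have one := one0; have mone := mone0.
have inj : injective s.
  move=> c t e; apply/eqP; apply: contraT => ct.
  have [u hu] : exists u, u \notin [:: c; t] by apply: pick_notin => /=; lia.
  move: hu; rewrite !inE !negb_or => /andP [uc ut].
  have cu : c != u by rewrite eq_sym.
  have tu : t != u by rewrite eq_sym.
  have tc : t != c by rewrite eq_sym.
  have [q1 [g1 [pq1 g10 A1]]] := hs c t ct 1 one.
  have [q2 [g2 [pq2 g20 A2]]] := hs c u cu 1 one.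
  have [q3 [g3 [pq3 g30 A3]]] := hs t u tu 1 one.
  have [q4 [g4 [pq4 g40 A4]]] := hs t c tc 1 one.
  rewrite -e in pq3 pq4 A3 A4.
  have q12 : q1 != q2.
    apply/eqP => eq; rewrite eq in A1.
    case: (diffq ct one cu one pq2 g10 g20 A1 A2) => [[_ h]|[h _]].
      by rewrite h eqxx in tu.
    by rewrite h eqxx in cu.
  have q23 : q2 != q3.
    apply/eqP => eq; rewrite eq in A2.
    case: (diffq cu one tu one pq3 g20 g30 A2 A3) => [[h _]|[h _]].
      by rewrite h eqxx in ct.
    by rewrite h eqxx in cu.
  have q34 : q3 != q4.
    apply/eqP => eq; rewrite eq in A3.
    case: (diffq tu one tc one pq4 g30 g40 A3 A4) => [[_ h]|[h _]].
      by rewrite h eqxx in uc.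
    by rewrite h eqxx in tc.
  have a12 : csr_adj (psi (mkV x c t 1)) (psi (mkV x c u 1)) by rewrite hadj adjY.
  have a23 : csr_adj (psi (mkV x c u 1)) (psi (mkV x t u 1)).
    rewrite hadj; apply: (adj_of (c := t) (t := c) (b := 1)) => //.
    by rewrite !mkVE -addrA [ed c u 1 + _]addrC edT.
  have a34 : csr_adj (psi (mkV x t u 1)) (psi (mkV x t c 1)) by rewrite hadj adjY.
  have E12 := SC pq1 pq2 q12 g10 g20 A1 A2 a12.
  have E23 := SC pq2 pq3 q23 g20 g30 A2 A3 a23.
  have E34 := SC pq3 pq4 q34 g30 g40 A3 A4 a34.
  have [g' [g'0 A1']] := SDx ct one mone pq1 g10 A1.
  rewrite -mkV_swap in A1'.
  case: (edU pq4 g40 pq1 (same_rep A4 A1')) => [[_ [eq4 _]]|[h _]]; last by rewrite h eqxx in pq1.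
  rewrite eq4 -E34 -E23 -E12 in A4.
  have : psi (mkV x t c 1) = psi (mkV x c t 1) by apply: val_inj; rewrite A4 A1.
  move/psi_inj; rewrite mkV_swap => /(congr1 val); rewrite !mkVE => /addrI /(ed_inj ct) /eqP.
  by rewrite (negbTE mone1).
exists s; split => // c t b ct b0.
have tc : t != c by rewrite eq_sym.
have [q [be [pq be0 A]]] := hs c t ct b b0.
have [q' [be' [pq' be0' A']]] := hs t c tc (- b) (opp_ne0 b0).
rewrite mkV_swap opprK in A'.
case: (edU pq be0 pq' (same_rep A A')) => [[h _]|[_ [h _]]].
  by move/inj: h => h; rewrite h eqxx in ct.
by exists be; rewrite -h.
Qed.

End Vertex.
Lemma Good_ext x s s' : s =1 s' -> Good x s -> Good x s'.
Proof.
move=> e G c t b ct b0; have [be [be0 h]] := G c t b ct b0.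
by exists be; rewrite -!e.
Qed.

Lemma step_eq (x y : vtx) a b al s t : a != b -> al != 0 -> val y = val x + ed a b al ->
  injective s -> injective t -> Good x s -> Good y t -> s =1 t.
Proof.
move=> ab al0 ey si ti Gx Gy.
have ba : b != a by rewrite eq_sym.
have yE : y = mkV x a b al by apply: val_inj.
have xE : x = mkV y b a al by apply: val_inj; rewrite mkVE ey -addrA edS edD addNr ed0 addr0.
have [g1 [g10 A1]] := Gx a b al ab al0.
have [g2 [g20 A2]] := Gy b a al ba al0.
rewrite -yE in A1; rewrite -xE in A2.
have sab : s a != s b by rewrite (inj_eq si).
have tba : t b != t a by rewrite (inj_eq ti).
have E1 : val (psi y) = val (psi x) + ed (t b) (t a) (- g2).
  by rewrite A2 -addrA edD subrr ed0 addr0.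
have D : forall c, c != a -> c != b -> (t b = s b /\ t c = s c) \/ (t b = s c /\ t c = s b).
  move=> c ca cb.
  have ac : a != c by rewrite eq_sym.
  have bc : b != c by rewrite eq_sym.
  have wy : mkV x a c al = mkV y b c al by apply: val_inj; rewrite !mkVE ey -addrA edT.
  have [g3 [g30 A3]] := Gx a c al ac al0.
  have [g4 [g40 A4]] := Gy b c al bc al0.
  rewrite -wy in A4.
  have sac : s a != s c by rewrite (inj_eq si).
  have sbc : s b != s c by rewrite (inj_eq si).
  have tbc : t b != t c by rewrite (inj_eq ti).
  have ayw : csr_adj (psi y) (psi (mkV x a c al)).
    rewrite hadj yE; exact: adjY.
  have E := SC sab sac sbc g10 g30 A1 A3 ayw.
  have A3' : val (psi (mkV x a c al)) = val (psi y) + ed (s b) (s c) g1.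
    by rewrite A3 A1 -E -addrA edT.
  case: (edU tbc g40 sbc (same_rep A4 A3')) => [[h1 [h2 _]]|[h1 [h2 _]]]; by [left|right].
have [c hc] : exists c, c \notin [:: a; b] by apply: pick_notin => /=; lia.
move: hc; rewrite !inE !negb_or => /andP [ca cb].
case: (edU sab g10 tba (same_rep A1 E1)) => [[h1 [h2 _]]|[h1 [h2 _]]].
  exfalso; case: (D c ca cb) => [[h3 _]|[h3 _]].
    by move: sab; rewrite h1 h3 eqxx.
  by move: (si _ _ (etrans h1 h3)) => h; rewrite h eqxx in ca.
move=> i; case: (eqVneq i a) => [->//|ia]; case: (eqVneq i b) => [->//|ib].
case: (D i ia ib) => [[_ h]|[h3 _]]; first by rewrite h.
by move: (si _ _ (etrans h2 h3)) => h; rewrite h eqxx in ib.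
Qed.

End Auto.


Section Final.
Variables m n : nat.
Local Notation vtx := (csr_vertex m n).
Local Notation ed := (@edelta m n).
Variables psi g : vtx -> vtx.
Hypothesis hpg : cancel psi g.
Hypothesis hgp : cancel g psi.
Hypothesis hadj : forall x y, csr_adj (psi x) (psi y) = csr_adj x y.
Hypothesis hm : (3 < m)%N.
Hypothesis two : (1 + 1 : 'Z_n) != 0.

Lemma v0_proof : \sum_(i < m) (0 : {ffun 'I_m -> 'Z_n}) i == 0.
Proof. by apply/eqP; apply: big1 => i _; rewrite ffunE. Qed.

Definition v0 : vtx := exist _ 0 v0_proof.

Variable s0 : 'I_m -> 'I_m.
Hypothesis s0_inj : injective s0.
Hypothesis s0_good : Good psi v0 s0.

Lemma val0_v0 (x : vtx) : (forall i, val x i = 0) -> x = v0.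
Proof. by move=> h; apply: val_inj; apply/ffunP => i; rewrite h ffunE. Qed.

Lemma all_good (k : nat) : forall x : vtx, (#|[set i | val x i != 0%R]| <= k)%N -> Good psi x s0.
Proof.
elim: k => [|k IH] x hk.
  have -> // : x = v0.
  apply: val0_v0 => i; apply/eqP; apply: contraT => hi.
  by move: hk; rewrite leqn0 => /eqP /card0_eq /(_ i); rewrite inE hi.
case: (pickP (fun i => val x i != 0)) => [i hi|h]; last first.
  have -> // : x = v0.
  by apply: val0_v0 => i; move/negbT: (h i); rewrite negbK => /eqP.
case: (pickP (fun j => (j != i) && (val x j != 0))) => [j /andP [ji hj]|h]; last first.
  exfalso; move: (valP x); rewrite (bigD1 i) //= big1 ?addr0 ?(negbTE hi) //.
  by move=> j ji; move/negbT: (h j); rewrite ji /= negbK => /eqP.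
have ij : i != j by rewrite eq_sym.
set x' := mkV x i j (- val x i).
have hx' : (#|[set l | val x' l != 0%R]| <= k)%N.
  have sub : [set l | val x' l != 0] \subset [set l | val x l != 0] :\ i.
    apply/subsetP => l; rewrite !inE mkVE ffunE.
    case: (eqVneq l i) => [->|li]; first by rewrite ed_c // subrr eqxx.
    case: (eqVneq l j) => [->|lj]; first by rewrite hj.
    by rewrite ed_out // addr0.
  have h2 : (#|[set l | val x' l != 0%R]| <= #|[set l | val x l != 0%R] :\ i|)%N.
    exact: subset_leq_card sub.
  have h1 : #|[set l | val x l != 0%R]| = (1 + #|[set l | val x l != 0%R] :\ i|)%N.
    by rewrite (cardsD1 i) inE hi.
  lia.
have Gx' := IH x' hx'.
have [t [ti Gt]] := good_exists hpg hgp hadj hm two x.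
have ex : val x = val x' + ed i j (val x i).
  by rewrite mkVE -addrA edD addNr ed0 addr0.
have e := step_eq hadj hm two ij hi ex s0_inj ti Gx' Gt.
by apply: (Good_ext (s := t)) => // l; rewrite e.
Qed.

Lemma good_all x : Good psi x s0.
Proof. exact: (@all_good #|[set i | val x i != 0]|). Qed.

Lemma partE c t (eta : vtx) : csr_part n c t eta = [set mkV eta c t al | al : 'Z_n].
Proof.
apply/setP => y; rewrite inE; apply/existsP/imsetP.
  case=> al /forallP H; exists al => //; apply: val_inj; apply/ffunP => i.
  by rewrite (eqP (H i)) mkVE edv_add.
by case=> al _ ->; exists al; apply/forallP => i; rewrite mkVE edv_add.
Qed.

Lemma card_part c t (eta : vtx) : c != t -> #|csr_part n c t eta| = #|'Z_n|.
Proof.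
move=> ct; rewrite partE card_imset //.
move=> a1 a2 /(congr1 val); rewrite !mkVE => /addrI; exact: ed_inj.
Qed.

Lemma line_img a b (xi : vtx) : a != b ->
  psi @: csr_part n a b xi = csr_part n (s0 a) (s0 b) (psi xi).
Proof.
move=> ab; have sab : s0 a != s0 b by rewrite (inj_eq s0_inj).
apply/eqP; rewrite eqEcard; apply/andP; split; last first.
  by rewrite card_imset; [rewrite !card_part | exact: (can_inj hpg)].
apply/subsetP => y /imsetP [z]; rewrite partE => /imsetP [al _ ->] ->.
rewrite partE; apply/imsetP.
case: (eqVneq al 0) => [->|al0].
  exists 0 => //; apply: val_inj; rewrite !mkVE !ed0 !addr0.
  by congr (val (psi _)); apply: val_inj; rewrite mkVE ed0 addr0.
have [be [be0 e]] := good_all xi ab al0.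
by exists be => //; apply: val_inj; rewrite e mkVE.
Qed.

End Final.


Lemma two_ne0 (n : nat) : (3 < n)%N -> (1 + 1 : 'Z_n) != 0.
Proof.
move=> hn; have n1 : (1 < n)%N by lia.
have h : nat_of_ord (2%:R : 'Z_n) = 2%N by rewrite val_Zp_nat // modn_small; lia.
apply/eqP => e; move: h; rewrite -[1 + 1]/((2%:R : 'Z_n)) in e; rewrite e.
by [].
Qed.

Local Close Scope ring_scope.

Theorem lemma5 (m n : nat) (hm : (3 < m)%N) (hn : (3 < n)%N)
  (psi : csr_vertex m n -> csr_vertex m n) (hpsi : csr_automorphism psi) :
  exists sigma : 'S_m, forall a b : 'I_m, a != b ->
    image_partition psi (csr_partition n a b) = csr_partition n (sigma a) (sigma b).
Proof.
case: hpsi => [[g hpg hgp] hadj].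
have two := two_ne0 hn.
have [s0 [s0i s0g]] := good_exists hpg hgp hadj hm two (v0 m n).
exists (perm s0i) => a b ab; rewrite !permE.
apply/setP => P; apply/imsetP/imsetP.
  case=> B /imsetP [xi _ ->] ->.
  exists (psi xi) => //.
  exact: (line_img hpg hgp hadj hm two s0i s0g xi ab).
case=> eta _ ->.
exists (csr_part n a b (g eta)); first by apply/imsetP; exists (g eta).
by rewrite (line_img hpg hgp hadj hm two s0i s0g (g eta) ab) hgp.
Qed.
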